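(* $\chi_i'(S_{C_4}^1)=2$ and $\chi_i'(S_{C_4}^n)=3$ for every integer $n\ge 2$, where $C_4$ is the cycle on $4$ vertices.
   Context: For a graph $H$ with at least one edge, an injective edge $k$-coloring is a map $c:E(H)\to\{1,\dots,k\}$ such that whenever $e_1=xy$, $e_2=yz$, $e_3=zu$ are edges of $H$ with $x,y,z$ distinct and $u\notin\{y,z\}$ (the case $u=x$ being allowed), we have $c(e_1)\ne c(e_3)$. The injective chromatic index $\chi_i'(H)$ is the least $k$ for which such a coloring exists. For a graph $G$ and positive integer $n$, the generalized Sierpiński graph $S_G^n$ has vertex set $V(G)^n$, and $(u_1,\dots,u_n)$, $(v_1,\dots,v_n)$ are adjacent if and only if there is $d\in\{1,\dots,n\}$ with $u_i=v_i$ for $i<d$, $u_dv_d\in E(G)$, and $u_i=v_d$, $v_i=u_d$ for all $i>d$. *)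

(* Defs.v *)
From mathcomp Require Import all_boot.
Set Implicit Arguments. Unset Strict Implicit. Unset Printing Implicit Defensive.

(* An edge xy is represented by the 2-element set [set x; y]; an edge
   k-colouring is a map from (edge) sets to 'I_k = {0,...,k-1}
   (only its values on edges matter). *)

Definition injective_edge_coloring (T : finType) (e : rel T) (k : nat)
  (c : {set T} -> 'I_k) : Prop :=
  forall x y z u : T, e x y -> e y z -> e z u ->
    x != y -> y != z -> x != z -> u != y -> u != z ->
    c [set x; y] != c [set z; u].

Definition inj_edge_colorable (T : finType) (e : rel T) (k : nat) : Prop :=
  exists c : {set T} -> 'I_k, injective_edge_coloring e c.

Definition inj_chromatic_index_is (T : finType) (e : rel T) (k : nat) : Prop :=
  inj_edge_colorable e k /\ (forall j, inj_edge_colorable e j -> k <= j).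

Definition sierpinski (V : finType) (G : rel V) (n : nat)
  : rel {ffun 'I_n -> V} :=
  fun u v => [exists d : 'I_n,
     [&& [forall i : 'I_n, (i < d) ==> (u i == v i)],
         G (u d) (v d) &
         [forall i : 'I_n, (d < i) ==> ((u i == v d) && (v i == u d))]]].

Definition C4 : rel 'I_4 :=
  fun x y => ((x.+1 %% 4) == y) || ((y.+1 %% 4) == x).

Arguments sierpinski {V} G n.

(* Main.v *)
Require Import Defs.
From mathcomp Require Import all_boot.
Set Implicit Arguments. Unset Strict Implicit. Unset Printing Implicit Defensive.

Definition fc (a b : 'I_4) : nat := if (a == 0 :> nat) || (b == 0 :> nat) then 1 else 0.
Definition gc (w a b : 'I_4) : nat :=
  if ~~ odd w && ((w == a) || (w == b)) then 2 else fc a b.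
Definition bcol (w a : 'I_4) : nat := if w == a then 2 else fc w a.

Definition lets : seq 'I_4 :=
  [:: Ordinal (isT : 0 < 4); Ordinal (isT : 1 < 4); Ordinal (isT : 2 < 4); Ordinal (isT : 3 < 4)].
Lemma in_lets (a : 'I_4) : a \in lets.
Proof. by case: a => [[|[|[|[|m]]]] H]. Qed.

Ltac inst H x := move/allP: H => /(_ x (in_lets x)) H.
Notation A1 P := (all (fun a => P a) lets).

Lemma C4symb : A1 (fun a => A1 (fun b => C4 a b == C4 b a)).
Proof. by vm_compute. Qed.
Lemma C4sym a b : C4 a b = C4 b a.
Proof. have H := C4symb. inst H a. inst H b. exact/eqP. Qed.
Lemma C4irrb : A1 (fun a => ~~ C4 a a).
Proof. by vm_compute. Qed.
Lemma C4irr a : C4 a a = false.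
Proof. have H := C4irrb. inst H a. exact/negbTE. Qed.

Lemma F1b : A1 (fun w => A1 (fun a => A1 (fun b => A1 (fun c => A1 (fun d =>
  [&& C4 a b, C4 a c, c != b, C4 b d & d != a] ==> (gc w a c != gc w b d)))))).
Proof. by vm_compute. Qed.
Lemma F2b : A1 (fun w => A1 (fun a => A1 (fun b => A1 (fun d =>
  [&& C4 a b, (w == a) || C4 w a, C4 b d & d != a] ==> (bcol w a != gc w b d))))).
Proof. by vm_compute. Qed.
Lemma F3b : A1 (fun w => A1 (fun a => A1 (fun b => A1 (fun c =>
  [&& C4 a b, C4 a c, c != b & (w == b) || C4 w b] ==> (gc w a c != bcol w b))))).
Proof. by vm_compute. Qed.
Lemma F4b : A1 (fun w => A1 (fun a => A1 (fun b =>
  [&& C4 a b, (w==a)||C4 w a & (w==b)||C4 w b] ==> (bcol w a != bcol w b)))).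
Proof. by vm_compute. Qed.
Lemma F5b : A1 (fun a => A1 (fun b => A1 (fun c => A1 (fun d =>
  [&& C4 a b, C4 a c & C4 b d] ==> (gc a a c != gc b b d))))).
Proof. by vm_compute. Qed.
Lemma F6b : A1 (fun a => A1 (fun b => A1 (fun c => A1 (fun d =>
  [&& C4 a b, C4 b c & C4 a d] ==> (gc a b c != gc b a d))))).
Proof. by vm_compute. Qed.
Lemma Gsymb : A1 (fun w => A1 (fun a => A1 (fun b => gc w a b == gc w b a))).
Proof. by vm_compute. Qed.
Lemma Bsymb : A1 (fun a => A1 (fun b => bcol a b == bcol b a)).
Proof. by vm_compute. Qed.
Lemma N1b : A1 (fun x => A1 (fun y => A1 (fun z => A1 (fun u =>
  [&& C4 x y, C4 y z, C4 z u, x != z & u != y] ==> (fc x y != fc z u))))).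
Proof. by vm_compute. Qed.
Lemma Fsymb : A1 (fun a => A1 (fun b => fc a b == fc b a)).
Proof. by vm_compute. Qed.

Lemma fc_lt a b : fc a b < 2. Proof. by rewrite /fc; case: ifP. Qed.
Lemma gc_lt w a b : gc w a b < 3.
Proof. by rewrite /gc; case: ifP => // _; apply: ltn_trans (fc_lt a b) _. Qed.
Lemma bcol_lt w a : bcol w a < 3.
Proof. by rewrite /bcol; case: ifP => // _; apply: ltn_trans (fc_lt _ _) _. Qed.

Definition Lv k (v : {ffun 'I_k.+2 -> 'I_4}) := v ord_max.
Definition Sv k (v : {ffun 'I_k.+2 -> 'I_4}) := v (inord k).
Definition iscyc k (x y : {ffun 'I_k.+2 -> 'I_4}) : bool :=
  [forall i : 'I_k.+2, (i < k.+1) ==> (x i == y i)].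

Lemma edge_inv k (x y : {ffun 'I_k.+2 -> 'I_4}) : sierpinski C4 k.+2 x y ->
  exists d : 'I_k.+2, [/\ forall i : 'I_k.+2, i < d -> x i = y i, C4 (x d) (y d) &
     forall i : 'I_k.+2, d < i -> x i = y d /\ y i = x d].
Proof.
case/existsP => d /and3P [/forallP H1 H2 /forallP H3]; exists d; split => // i Hi.
  by move: (H1 i); rewrite Hi => /eqP.
by move: (H3 i); rewrite Hi => /andP [/eqP -> /eqP ->].
Qed.

Lemma sym_e k (x y : {ffun 'I_k.+2 -> 'I_4}) : sierpinski C4 k.+2 x y -> sierpinski C4 k.+2 y x.
Proof.
case/existsP => d /and3P [/forallP H1 H2 /forallP H3]; apply/existsP; exists d.
apply/and3P; split; first (apply/forallP => i; by rewrite eq_sym; exact: H1).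
  by rewrite C4sym.
apply/forallP => i; apply/implyP => Hi; move/implyP: (H3 i) => /(_ Hi) /andP [-> ->].
by [].
Qed.

Lemma iscyc_sym k (x y : {ffun 'I_k.+2 -> 'I_4}) : iscyc x y = iscyc y x.
Proof. by apply/eq_forallb => i; rewrite eq_sym. Qed.

Lemma inordk k : nat_of_ord (inord k : 'I_k.+2) = k.
Proof. by rewrite inordK // ltnS leqnSn. Qed.

Lemma cyc_of k (x y : {ffun 'I_k.+2 -> 'I_4}) : sierpinski C4 k.+2 x y -> iscyc x y ->
  Sv x = Sv y /\ C4 (Lv x) (Lv y).
Proof.
move=> /edge_inv [d [H1 H2 H3]] /forallP Hc; split.
  by move/implyP: (Hc (inord k)); rewrite inordk => /(_ (ltnSn k)) /eqP.
have Ed : d = ord_max.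
  apply/val_inj => /=; have := ltn_ord d; rewrite ltnS leq_eqVlt => /orP [/eqP //|Hd].
  by move/implyP: (Hc d) => /(_ Hd) /eqP E; rewrite E C4irr in H2.
by rewrite Ed in H2.
Qed.

Lemma br_of k (x y : {ffun 'I_k.+2 -> 'I_4}) : sierpinski C4 k.+2 x y -> ~~ iscyc x y ->
  C4 (Lv y) (Lv x) /\ ((Sv x = Lv x /\ Sv y = Lv y) \/ (Sv x = Lv y /\ Sv y = Lv x)).
Proof.
move=> /edge_inv [d [H1 H2 H3]] Hc.
have Hd : d < k.+1.
  rewrite ltnNge; apply/negP => Hd; case/negP: Hc; apply/forallP => i; apply/implyP => Hi.
  by apply/eqP/H1; apply: leq_trans Hd.
have [HLx HLy] : Lv x = y d /\ Lv y = x d by apply: H3.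
rewrite /Lv in HLx HLy; rewrite /Lv HLx HLy; split; first exact: H2.
move: Hd; rewrite ltnS leq_eqVlt => /orP [/eqP Ek|Hd].
  right; rewrite /Sv; have -> : (inord k : 'I_k.+2) = d by apply/val_inj; rewrite /= inordk Ek.
  by [].
left; rewrite /Sv; apply: H3; by rewrite inordk.
Qed.

Lemma cyc_uniq k (y x z : {ffun 'I_k.+2 -> 'I_4}) : iscyc y x -> iscyc y z -> Lv x = Lv z -> x = z.
Proof.
move=> /forallP H1 /forallP H2 HL; apply/ffunP => i.
case: (ltnP i k.+1) => Hi.
  by move/implyP: (H1 i) => /(_ Hi) /eqP <-; move/implyP: (H2 i) => /(_ Hi) /eqP <-.
have -> : i = ord_max by apply/val_inj/anti_leq; rewrite Hi -ltnS ltn_ord.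
exact: HL.
Qed.

Lemma br_uniq k (y x z : {ffun 'I_k.+2 -> 'I_4}) :
  sierpinski C4 k.+2 y x -> ~~ iscyc y x -> sierpinski C4 k.+2 y z -> ~~ iscyc y z -> x = z.
Proof.
have dlt : forall (x : {ffun 'I_k.+2 -> 'I_4}) (d : 'I_k.+2), ~~ iscyc y x ->
   (forall i : 'I_k.+2, i < d -> y i = x i) -> d < k.+1.
  move=> x0 d Hc H1; rewrite ltnNge; apply/negP => Hd; case/negP: Hc; apply/forallP => i.
  by apply/implyP => Hi; apply/eqP/H1; apply: leq_trans Hd.
move=> /edge_inv [d1 [H11 H12 H13]] Hc1 /edge_inv [d2 [H21 H22 H23]] Hc2.
have Hd1 := dlt _ _ Hc1 H11; have Hd2 := dlt _ _ Hc2 H21.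
have [L1 _] : y ord_max = x d1 /\ _ := H13 ord_max Hd1.
have [L2 _] : y ord_max = z d2 /\ _ := H23 ord_max Hd2.
have Ed : d1 = d2.
  apply/val_inj; case: (ltngtP d1 d2) => // H.
    have [E _] := H13 d2 H; by rewrite E -L1 L2 C4irr in H22.
  have [E _] := H23 d1 H; by rewrite E -L2 L1 C4irr in H12.
subst d2; apply/ffunP => i; case: (ltngtP i d1) => H.
- by rewrite -H11 // H21.
- by have [_ ->] := H13 i H; have [_ ->] := H23 i H.
- have -> : i = d1 by apply/val_inj.
  by rewrite -L1 -L2.
Qed.

Definition colp k (x y : {ffun 'I_k.+2 -> 'I_4}) : nat :=
  if iscyc x y then gc (Sv x) (Lv x) (Lv y) else bcol (Sv x) (Lv x).


Lemma colp_sym k (x y : {ffun 'I_k.+2 -> 'I_4}) : sierpinski C4 k.+2 x y -> colp x y = colp y x.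
Proof.
move=> He; rewrite /colp iscyc_sym; case: ifP => Hc.
  have Hc' : iscyc x y by rewrite iscyc_sym.
  have [HS _] := cyc_of He Hc'.
  rewrite HS; have H := Gsymb; inst H (Sv y); inst H (Lv x); inst H (Lv y); exact/eqP.
have Hc' : ~~ iscyc x y by rewrite iscyc_sym Hc.
have [_ [[-> ->]|[-> ->]]] := br_of He Hc'.
  by rewrite /bcol !eqxx.
have H := Bsymb; inst H (Lv y); inst H (Lv x); exact/eqP.
Qed.

Lemma colp_inj k (x y z u : {ffun 'I_k.+2 -> 'I_4}) :
  sierpinski C4 k.+2 x y -> sierpinski C4 k.+2 y z -> sierpinski C4 k.+2 z u ->
  x != z -> u != y -> colp y x != colp z u.
Proof.
move=> Hxy Hyz Hzu Nxz Nuy.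
have Hyx := sym_e Hxy; have Hzy := sym_e Hyz.
rewrite /colp.
case Cyz: (iscyc y z).
  have [ESyz Cyz'] := cyc_of Hyz Cyz.
  have Czy : iscyc z y by rewrite iscyc_sym.
  case Cyx: (iscyc y x).
    have [_ Cyx'] := cyc_of Hyx Cyx.
    have NLxz : Lv x != Lv z by apply/eqP => E; case/eqP: Nxz; apply: (cyc_uniq Cyx Cyz E).
    case Czu: (iscyc z u).
      have [_ Czu'] := cyc_of Hzu Czu.
      have NLuy : Lv u != Lv y by apply/eqP => E; case/eqP: Nuy; apply: (cyc_uniq Czu Czy E).
      have H := F1b; inst H (Sv y); inst H (Lv y); inst H (Lv z); inst H (Lv x); inst H (Lv u).
      rewrite -ESyz; apply: (implyP H); by apply/and5P.
    have [Czu' Hs] := br_of Hzu (negbT Czu).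
    have Hw : (Sv z == Lv z) || C4 (Sv z) (Lv z).
      by case: Hs => [[-> _]|[-> _]]; rewrite ?eqxx // Czu' orbT.
    have H := F3b; inst H (Sv y); inst H (Lv y); inst H (Lv z); inst H (Lv x).
    rewrite -ESyz; apply: (implyP H); rewrite Cyz' Cyx' NLxz /=; by rewrite -ESyz in Hw.
  have [Cyx' Hs] := br_of Hyx (negbT Cyx).
  have Hw : (Sv y == Lv y) || C4 (Sv y) (Lv y).
    by case: Hs => [[-> _]|[-> _]]; rewrite ?eqxx // Cyx' orbT.
  case Czu: (iscyc z u).
    have [_ Czu'] := cyc_of Hzu Czu.
    have NLuy : Lv u != Lv y by apply/eqP => E; case/eqP: Nuy; apply: (cyc_uniq Czu Czy E).
    have H := F2b; inst H (Sv y); inst H (Lv y); inst H (Lv z); inst H (Lv u).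
    rewrite -ESyz; apply: (implyP H); by rewrite Cyz' Hw Czu' NLuy.
  have [Czu' Hs'] := br_of Hzu (negbT Czu).
  have Hw' : (Sv z == Lv z) || C4 (Sv z) (Lv z).
    by case: Hs' => [[-> _]|[-> _]]; rewrite ?eqxx // Czu' orbT.
  have H := F4b; inst H (Sv y); inst H (Lv y); inst H (Lv z).
  rewrite -ESyz; apply: (implyP H); rewrite Cyz' Hw /=; by rewrite -ESyz in Hw'.
have Cyx : iscyc y x.
  apply/negPn/negP => Cyx; case/eqP: Nxz; apply: (br_uniq Hyx _ Hyz) => //; by rewrite Cyz.
have Czu : iscyc z u.
  apply/negPn/negP => Czu; case/eqP: Nuy; apply: (br_uniq Hzu _ Hzy) => //; by rewrite iscyc_sym Cyz.
rewrite Cyx Czu.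
have [_ Cyx'] := cyc_of Hyx Cyx; have [_ Czu'] := cyc_of Hzu Czu.
have [Czy' [[-> ->]|[-> ->]]] := br_of Hyz (negbT Cyz).
  have H := F5b; inst H (Lv y); inst H (Lv z); inst H (Lv x); inst H (Lv u).
  apply: (implyP H); by rewrite C4sym Czy' Cyx' Czu'.
have H := F6b; inst H (Lv z); inst H (Lv y); inst H (Lv x); inst H (Lv u).
apply: (implyP H); by rewrite Czy' Cyx' Czu'.
Qed.

Definition mkc (T : finType) (e : rel T) k (col : T -> T -> 'I_k) (d0 : 'I_k) (S : {set T}) : 'I_k :=
  if [pick p : T * T | (S == [set p.1; p.2]) && e p.1 p.2] is Some p then col p.1 p.2 else d0.

Lemma mkcE (T : finType) (e : rel T) k (col : T -> T -> 'I_k) d0 x y :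
  (forall a b, e a b -> col a b = col b a) -> e x y -> mkc e col d0 [set x; y] = col x y.
Proof.
move=> Hs Hxy; rewrite /mkc; case: pickP => [[a b] /= /andP [/eqP E Hab]|H]; last first.
  by have := H (x, y); rewrite /= eqxx Hxy.
have Hx : x \in [set a; b] by rewrite -E set21.
have Hy : y \in [set a; b] by rewrite -E set22.
have Ha : a \in [set x; y] by rewrite E set21.
have Hb : b \in [set x; y] by rewrite E set22.
move: Hx Hy Ha Hb; rewrite !inE.
case/orP => /eqP Hx; case/orP => /eqP Hy; subst x y; rewrite ?orbb.
- by move=> _ /eqP ->.
- by [].
- by move=> _ _; rewrite Hs.
- by move=> /eqP ->.
Qed.

Lemma col_widen (T : finType) (e : rel T) j m :
  inj_edge_colorable e j -> j <= m -> inj_edge_colorable e m.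
Proof.
move=> [c Hc] Hjm; exists (fun S => widen_ord Hjm (c S)) => x y z u H1 H2 H3 N1 N2 N3 N4 N5.
apply/negP => /eqP /(congr1 val) /= /val_inj /eqP; apply/negP; exact: Hc.
Qed.

Lemma colp_lt k (x y : {ffun 'I_k.+2 -> 'I_4}) : colp x y < 3.
Proof. by rewrite /colp; case: ifP => _; [exact: gc_lt | exact: bcol_lt]. Qed.

Lemma upper k : inj_edge_colorable (sierpinski C4 k.+2) 3.
Proof.
have Hs : forall a b, sierpinski C4 k.+2 a b ->
    (inord (colp a b) : 'I_3) = inord (colp b a) by move=> a b H; rewrite colp_sym.
exists (mkc (sierpinski C4 k.+2) (fun x y => inord (colp x y) : 'I_3) ord0).
move=> x y z u Hxy Hyz Hzu N1 N2 N3 N4 N5.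
rewrite !mkcE // colp_sym //.
apply/negP => /eqP /(congr1 val) /=; rewrite !inordK ?colp_lt // => /eqP.
by apply/negP; apply: colp_inj.
Qed.

Lemma e1_inv (x y : {ffun 'I_1 -> 'I_4}) : sierpinski C4 1 x y -> C4 (x ord0) (y ord0).
Proof.
case/existsP => d /and3P [_ H _]; have Ed : d = ord0 by rewrite (ord1 d).
by rewrite Ed in H.
Qed.

Lemma upper1 : inj_edge_colorable (sierpinski C4 1) 2.
Proof.
have Hs : forall a b : {ffun 'I_1 -> 'I_4}, sierpinski C4 1 a b ->
    (inord (fc (a ord0) (b ord0)) : 'I_2) = inord (fc (b ord0) (a ord0)).
  by move=> a b _; have H := Fsymb; inst H (a ord0); inst H (b ord0); rewrite (eqP H).
exists (mkc (sierpinski C4 1) (fun x y => inord (fc (x ord0) (y ord0)) : 'I_2) ord0).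
move=> x y z u Hxy Hyz Hzu N1 N2 N3 N4 N5.
rewrite !mkcE //.
have nq : forall a b : {ffun 'I_1 -> 'I_4}, a != b -> a ord0 != b ord0.
  move=> a b; apply: contra => /eqP E; apply/eqP/ffunP => i; by rewrite (ord1 i).
apply/negP => /eqP /(congr1 val) /=; rewrite !inordK ?fc_lt // => /eqP.
apply/negP.
have H := N1b; inst H (x ord0); inst H (y ord0); inst H (z ord0); inst H (u ord0).
apply: (implyP H); by rewrite !e1_inv // !nq.
Qed.

Notation L n := (@Ordinal 4 n isT).

Definition v1 (a : 'I_4) : {ffun 'I_1 -> 'I_4} := [ffun => a].

Lemma adj1 a b : C4 a b -> sierpinski C4 1 (v1 a) (v1 b).
Proof.
move=> H; apply/existsP; exists ord0; apply/and3P; split.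
- by apply/forallP => i; rewrite ltn0.
- by rewrite !ffunE.
- by apply/forallP => -[[|i] Hi].
Qed.

Lemma v1_neq a b : a != b -> v1 a != v1 b.
Proof. by apply: contra => /eqP /ffunP /(_ ord0); rewrite !ffunE => ->. Qed.

Lemma lower1 : ~ inj_edge_colorable (sierpinski C4 1) 1.
Proof.
move=> [c Hc].
have := Hc (v1 (L 1)) (v1 (L 0)) (v1 (L 3)) (v1 (L 2)).
move=> /(_ (adj1 _) (adj1 _) (adj1 _)) => /(_ isT isT isT).
move=> /(_ (v1_neq _) (v1_neq _) (v1_neq _) (v1_neq _) (v1_neq _)) => /(_ isT isT isT isT isT).
by rewrite (ord1 (c _)) (ord1 (c [set _; _])).
Qed.

Definition emb k (a b : 'I_4) : {ffun 'I_k.+2 -> 'I_4} :=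
  [ffun i => if i == ord_max then b else if i == inord k then a else L 0].

Lemma inordk_max k : ((inord k : 'I_k.+2) == ord_max) = false.
Proof. by apply/negbTE; rewrite -val_eqE /= inordk neq_ltn ltnSn. Qed.

Lemma emb_max k a b : emb k a b ord_max = b.
Proof. by rewrite ffunE eqxx. Qed.
Lemma emb_k k a b : emb k a b (inord k) = a.
Proof. by rewrite ffunE inordk_max eqxx. Qed.

Lemma adj_c k a b b' : C4 b b' -> sierpinski C4 k.+2 (emb k a b) (emb k a b').
Proof.
move=> H; apply/existsP; exists ord_max; apply/and3P; split.
- apply/forallP => i; apply/implyP => Hi; rewrite !ffunE.
  have -> : (i == ord_max) = false by apply/negbTE; rewrite -val_eqE /= neq_ltn Hi.
  by [].
- by rewrite !emb_max.
- by apply/forallP => i; rewrite /= ltnNge -ltnS ltn_ord.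
Qed.

Lemma adj_b k a b : C4 a b -> sierpinski C4 k.+2 (emb k a b) (emb k b a).
Proof.
move=> H; apply/existsP; exists (inord k); apply/and3P; split.
- apply/forallP => i; apply/implyP; rewrite inordk => Hi; rewrite !ffunE.
  have -> : (i == ord_max) = false by apply/negbTE; rewrite -val_eqE /= neq_ltn (ltn_trans Hi).
  have -> : (i == inord k) = false by apply/negbTE; rewrite -val_eqE /= inordk neq_ltn Hi.
  by [].
- by rewrite !emb_k.
- apply/forallP => i; apply/implyP; rewrite inordk => Hi.
  have -> : i = ord_max by apply/val_inj/anti_leq; rewrite Hi -ltnS ltn_ord.
  by rewrite !emb_max !emb_k !eqxx.
Qed.

Lemma emb_neq k a b a' b' : (a != a') || (b != b') -> emb k a b != emb k a' b'.
Proof.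
case/orP => N; apply: contra N => /eqP E.
  by rewrite -(emb_k k a b) -(emb_k k a' b') E.
by rewrite -(emb_max k a b) -(emb_max k a' b') E.
Qed.

Lemma I2c (p q r s t : 'I_2) : p != q -> r != q -> r != s -> s != t -> p != t -> False.
Proof.
by case: p => [[|[|?]] ?] //; case: q => [[|[|?]] ?] //; case: r => [[|[|?]] ?] //;
   case: s => [[|[|?]] ?] //; case: t => [[|[|?]] ?].
Qed.

Lemma set2C (T : finType) (x y : T) : [set x; y] = [set y; x].
Proof. exact: setUC. Qed.

Ltac side := match goal with
 | |- is_true (sierpinski _ _ (emb _ ?a ?b) (emb _ ?b ?a)) => apply: adj_b; by []
 | |- is_true (sierpinski _ _ (emb _ ?a _) (emb _ ?a _)) => apply: adj_c; by []
 | |- is_true (_ != _) => apply: emb_neq; by []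
 end.

Lemma lower k : ~ inj_edge_colorable (sierpinski C4 k.+2) 2.
Proof.
move=> [c Hc].
have h1 : c [set (emb k (L 1) (L 0)); (emb k (L 0) (L 1))] != c [set (emb k (L 0) (L 0)); (emb k (L 0) (L 3))] by apply: Hc; side.
have h2 : c [set (emb k (L 0) (L 1)); (emb k (L 0) (L 2))] != c [set (emb k (L 0) (L 3)); (emb k (L 0) (L 0))] by apply: Hc; side.
have h3 : c [set (emb k (L 0) (L 2)); (emb k (L 0) (L 1))] != c [set (emb k (L 1) (L 0)); (emb k (L 1) (L 1))] by apply: Hc; side.
have h4 : c [set (emb k (L 1) (L 1)); (emb k (L 1) (L 0))] != c [set (emb k (L 1) (L 3)); (emb k (L 1) (L 2))] by apply: Hc; side.
have h5 : c [set (emb k (L 0) (L 1)); (emb k (L 1) (L 0))] != c [set (emb k (L 1) (L 3)); (emb k (L 1) (L 2))] by apply: Hc; side.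
rewrite (set2C ((emb k (L 1) (L 0)))) in h1; rewrite (set2C ((emb k (L 0) (L 3)))) in h2.
rewrite (set2C ((emb k (L 0) (L 2)))) in h3; rewrite (set2C ((emb k (L 1) (L 1)))) in h4.
exact: (I2c h1 h2 h3 h4 h5).
Qed.

Theorem mainTheorem7 :
  inj_chromatic_index_is (sierpinski C4 1) 2 /\
  (forall n : nat, 2 <= n -> inj_chromatic_index_is (sierpinski C4 n) 3).
Proof.
split.
  split; first exact: upper1.
  move=> j Hj; rewrite leqNgt; apply/negP => Hlt; apply: lower1; apply: col_widen Hj _.
  by rewrite -ltnS.
case=> [|[|k]] // _; split; first exact: upper.
move=> j Hj; rewrite leqNgt; apply/negP => Hlt; apply: (@lower k); apply: col_widen Hj _.
by rewrite -ltnS.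
Qed.
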